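(* Let $0<r<s<\infty$, $\alpha>0$, $\beta>0$, and for $n\ge3$ let $h_*=h_*(n)>0$ be defined by $\frac{2\alpha}{h_*^r}+\frac{2\beta}{h_*^s}=\log n-(\log\log n)^2$. Let $h_n>0$ with $h_n\to0$ satisfy $$b\log h_n+\frac{2\alpha}{h_n^r}+\frac{2\beta}{h_n^s}=\log n+C(1+o(1)),\quad n\to\infty,$$ for some $b\in\mathbb{R}$, $C\in\mathbb{R}$. Then, as $n\to\infty$: $h_*(n)=(\log n/(2\beta))^{-1/s}(1+o(1))$; for every $a\in\mathbb{R}$, $$h_n^a\exp\Big(-\frac{2\alpha}{h_n^r}\Big)=h_*^a\exp\Big(-\frac{2\alpha}{h_*^r}\Big)(1+o(1))\quad\text{and}\quad\frac{h_*^a}{n}\exp\Big(\frac{2\beta}{h_*^s}\Big)=o\Big(\exp\Big(-\frac{2\alpha}{h_*^r}\Big)\Big);$$ and for every $\gamma\in\mathbb{R}$, for $n$ large enough, $$h_*^{s+2\gamma-1}\exp\Big(\frac{2\beta}{h_*^s}\Big)\le h_n^{s+2\gamma-1}\exp\Big(\frac{2\beta}{h_n^s}\Big).$$ *)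

(* Defs.v *)
From Stdlib Require Export Reals.
Open Scope R_scope.

Definition eventually (P : nat -> Prop) : Prop :=
  exists N : nat, forall n : nat, (N <= n)%nat -> P n.

Definition asymp_one (f g : nat -> R) : Prop :=
  exists eps : nat -> R, Un_cv eps 0 /\
    eventually (fun n => f n = g n * (1 + eps n)).

Definition littleo (f g : nat -> R) : Prop :=
  forall e : R, 0 < e -> eventually (fun n => Rabs (f n) <= e * Rabs (g n)).

(* Main.v *)
From Stdlib Require Import Reals Lra Lia Psatz ZArith.
Require Import Defs.
Open Scope R_scope.

Definition tinf (u : nat -> R) := forall M, eventually (fun n => M <= u n).

Lemma ev_and (P Q : nat -> Prop) : eventually P -> eventually Q -> eventually (fun n => P n /\ Q n).
Proof. intros [N1 H1] [N2 H2]; exists (N1 + N2)%nat; intros n Hn; split; [apply H1|apply H2]; lia. Qed.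

Lemma ev_mono (P Q : nat -> Prop) : (forall n, P n -> Q n) -> eventually P -> eventually Q.
Proof. intros H [N HN]; exists N; auto. Qed.

Lemma ev_ge k : eventually (fun n => (k <= n)%nat).
Proof. exists k; auto. Qed.

Lemma cv_ev u l e : Un_cv u l -> 0 < e -> eventually (fun n => Rabs (u n - l) < e).
Proof. intros H He; destruct (H e He) as [N HN]; exists N; intros n Hn; apply HN; lia. Qed.

Lemma cv_ext_ev u v l : eventually (fun n => u n = v n) -> Un_cv v l -> Un_cv u l.
Proof.
  intros [N HN] Hv e He; destruct (Hv e He) as [M HM]; exists (N + M)%nat; intros n Hn.
  rewrite HN by lia; apply HM; lia.
Qed.

Lemma cv_squeeze0 u v : eventually (fun n => Rabs (u n) <= v n) -> Un_cv v 0 -> Un_cv u 0.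
Proof.
  intros [N HN] Hv e He; destruct (Hv e He) as [M HM]; exists (N + M)%nat; intros n Hn.
  unfold R_dist in *. specialize (HN n ltac:(lia)). specialize (HM n ltac:(lia)).
  rewrite Rminus_0_r in *. apply Rabs_def2 in HM. lra.
Qed.

Lemma cv_exp u : Un_cv u 0 -> Un_cv (fun n => exp (u n)) 1.
Proof.
  intro H. rewrite <- exp_0. apply (continuity_seq exp u 0); auto.
  apply derivable_continuous_pt, derivable_pt_exp.
Qed.

Lemma cv_ln u : Un_cv u 1 -> Un_cv (fun n => ln (u n)) 0.
Proof.
  intro H. rewrite <- ln_1. apply (continuity_seq ln u 1); auto.
  apply derivable_continuous_pt. exists (/1). apply derivable_pt_lim_ln; lra.
Qed.

Lemma cv_scal c u : Un_cv u 0 -> Un_cv (fun n => c * u n) 0.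
Proof.
  intro H. apply cv_squeeze0 with (fun n => (Rabs c + 1) * Rabs (u n)).
  - exists 0%nat; intros n _. rewrite Rabs_mult.
    apply Rmult_le_compat_r; [apply Rabs_pos|lra].
  - intros e He. destruct (H (e / (Rabs c + 1))) as [N HN].
    { apply Rdiv_lt_0_compat; [lra|]. pose proof (Rabs_pos c); lra. }
    exists N; intros n Hn. specialize (HN n Hn). unfold R_dist in *.
    rewrite Rminus_0_r in *. pose proof (Rabs_pos c).
    rewrite Rabs_mult, Rabs_Rabsolu, (Rabs_right (Rabs c + 1)) by lra.
    apply Rmult_lt_reg_r with (/ (Rabs c + 1)). apply Rinv_0_lt_compat; lra.
    replace ((Rabs c + 1) * Rabs (u n) * / (Rabs c + 1)) with (Rabs (u n)) by (field; lra).
    exact HN.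
Qed.

Lemma cv_plus0 u v : Un_cv u 0 -> Un_cv v 0 -> Un_cv (fun n => u n + v n) 0.
Proof. intros Hu Hv. replace 0 with (0 + 0) by ring. now apply CV_plus. Qed.

Lemma tinf_INR : tinf INR.
Proof.
  intro M. exists (Z.to_nat (up M)). intros n Hn.
  destruct (archimed M) as [H1 _].
  apply le_INR in Hn.
  destruct (Z_lt_le_dec (up M) 0) as [Hz|Hz].
  - apply IZR_lt in Hz. pose proof (pos_INR n). lra.
  - rewrite INR_IZR_INZ, Z2Nat.id in Hn by lia. lra.
Qed.

Lemma tinf_ln u : tinf u -> tinf (fun n => ln (u n)).
Proof.
  intros H M. apply ev_mono with (fun n => exp M <= u n); [|apply H].
  intros n Hn. rewrite <- (ln_exp M).
  destruct (Req_dec (exp M) (u n)) as [E|E]; [rewrite E; lra|].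
  left; apply ln_increasing; [apply exp_pos|lra].
Qed.

Lemma exp_cube x : 0 <= x -> (x / 3) ^ 3 <= exp x.
Proof.
  intro Hx. replace (exp x) with (exp (x/3) ^ 3).
  2:{ simpl. rewrite Rmult_1_r, <- !exp_plus. f_equal. field. }
  apply pow_incr. split; [lra|]. pose proof (exp_ineq1_le (x/3)); lra.
Qed.

Lemma exp_sq x : 0 <= x -> x ^ 2 / 4 <= exp x.
Proof.
  intro Hx. replace (exp x) with (exp (x/2) ^ 2).
  2:{ simpl. rewrite Rmult_1_r, <- !exp_plus. f_equal. field. }
  replace (x ^ 2 / 4) with ((x/2)^2) by field.
  apply pow_incr. split; [lra|]. pose proof (exp_ineq1_le (x/2)); lra.
Qed.

Lemma cv_poly_exp q u : 0 < q -> tinf u -> Un_cv (fun n => u n ^ 2 * exp (- q * u n)) 0.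
Proof.
  intros Hq Hu. apply cv_squeeze0 with (fun n => 27 / (q ^ 3 * u n)).
  - apply ev_mono with (fun n => 1 <= u n); [|apply Hu]. intros n Hn.
    pose proof (exp_cube (q * u n) ltac:(nra)).
    assert (Hq3 : 0 < q ^ 3) by (apply pow_lt; lra).
    pose proof (exp_pos (q * u n)).
    replace (- q * u n) with (- (q * u n)) by ring. rewrite exp_Ropp.
    rewrite Rabs_right. 2:{ apply Rle_ge, Rmult_le_pos; [nra|left; apply Rinv_0_lt_compat; lra]. }
    apply Rmult_le_reg_r with (exp (q * u n) * (q^3 * u n)). apply Rmult_lt_0_compat; [lra| apply Rmult_lt_0_compat; lra].
    field_simplify; try lra.
  - intros e He. destruct (Hu (27 / (q^3 * e) + 1)) as [N HN].
    assert (Hq3 : 0 < q ^ 3) by (apply pow_lt; lra).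
    assert (0 < 27 / (q^3 * e)) by (apply Rdiv_lt_0_compat; nra).
    exists N; intros n Hn. specialize (HN n Hn). unfold R_dist. rewrite Rminus_0_r.
    rewrite Rabs_right. 2:{ apply Rle_ge, Rlt_le, Rdiv_lt_0_compat; nra. }
    apply Rmult_lt_reg_r with (q^3 * u n). nra.
    unfold Rdiv. rewrite Rmult_assoc, Rinv_l by nra. rewrite Rmult_1_r.
    unfold Rdiv in *.
    apply Rmult_lt_reg_r with (/ (q^3 * e)). apply Rinv_0_lt_compat; nra.
    replace (e * (q ^ 3 * u n) * / (q ^ 3 * e)) with (u n) by (field; nra). lra.
Qed.

Lemma exp_le x y : x <= y -> exp x <= exp y.
Proof. intros [H|H]; [left; now apply exp_increasing | subst; lra]. Qed.

Lemma ln_le x y : 0 < x -> x <= y -> ln x <= ln y.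
Proof. intros Hx [H|H]; [left; apply ln_increasing; lra | subst; lra]. Qed.

Lemma rp_div c x p : c / Rpower x p = c * exp (p * - ln x).
Proof. unfold Rpower, Rdiv. f_equal. rewrite <- exp_Ropp. f_equal. ring. Qed.

Lemma ln_div x y : 0 < x -> 0 < y -> ln (x / y) = ln x - ln y.
Proof. intros. unfold Rdiv. rewrite ln_mult, ln_Rinv; try lra. apply Rinv_0_lt_compat; lra. Qed.

Lemma cv_const_plus c w : Un_cv w 0 -> Un_cv (fun n => c + w n) c.
Proof.
  intros H e He. destruct (H e He) as [N HN]. exists N. intros n Hn.
  specialize (HN n Hn). unfold R_dist in *. replace (c + w n - c) with (w n - 0) by ring. auto.
Qed.

Lemma cv_sub1 u : Un_cv u 1 -> Un_cv (fun n => u n - 1) 0.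
Proof.
  intros H e He. destruct (H e He) as [N HN]. exists N. intros n Hn.
  specialize (HN n Hn). unfold R_dist in *. replace (u n - 1 - 0) with (u n - 1) by ring. auto.
Qed.

Lemma cv_exp_neg q u : 0 < q -> tinf u -> Un_cv (fun n => exp (- q * u n)) 0.
Proof.
  intros Hq Hu. apply cv_squeeze0 with (fun n => u n ^ 2 * exp (- q * u n)).
  - apply ev_mono with (fun n => 1 <= u n); [|apply Hu]. intros n Hn.
    pose proof (exp_pos (- q * u n)). rewrite Rabs_right by lra.
    assert (1 <= u n ^ 2) by nra. nra.
  - now apply cv_poly_exp.
Qed.

Lemma asymp_ratio f g : (forall n, g n <> 0) -> Un_cv (fun n => f n / g n) 1 -> asymp_one f g.
Proof.
  intros Hg H. exists (fun n => f n / g n - 1). split.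
  - now apply cv_sub1.
  - exists 0%nat. intros n _. field. auto.
Qed.

Lemma exp_m1_le x : 0 <= x -> exp x - 1 <= x * exp x.
Proof.
  intros Hx. pose proof (exp_ineq1_le (- x)). pose proof (exp_pos x).
  assert (exp (-x) * exp x = 1) by (rewrite <- exp_plus; replace (-x + x) with 0 by ring; apply exp_0).
  nra.
Qed.

Lemma abs_C_eps C e : Rabs e <= 1 -> Rabs (C * (1 + e)) <= 2 * Rabs C.
Proof.
  intros H. rewrite Rabs_mult. pose proof (Rabs_pos C).
  assert (Rabs (1 + e) <= 2). { eapply Rle_trans; [apply Rabs_triang|]. rewrite Rabs_R1. lra. }
  nra.
Qed.

Lemma Rabs_le_between x y : Rabs x <= y -> - y <= x <= y.
Proof. unfold Rabs; destruct (Rcase_abs x); lra. Qed.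

Theorem lemma8 (r s alpha beta b C : R) (hs h : nat -> R) :
  0 < r -> r < s -> 0 < alpha -> 0 < beta ->
  (forall n : nat, (3 <= n)%nat ->
     0 < hs n /\
     2 * alpha / Rpower (hs n) r + 2 * beta / Rpower (hs n) s
       = ln (INR n) - (ln (ln (INR n))) ^ 2) ->
  eventually (fun n => 0 < h n) ->
  Un_cv h 0 ->
  (exists eps : nat -> R, Un_cv eps 0 /\
     eventually (fun n =>
       b * ln (h n) + 2 * alpha / Rpower (h n) r + 2 * beta / Rpower (h n) s
         = ln (INR n) + C * (1 + eps n))) ->
  asymp_one hs (fun n => Rpower (ln (INR n) / (2 * beta)) (- (1 / s)))
  /\ (forall a : R,
        asymp_one
          (fun n => Rpower (h n) a * exp (- (2 * alpha / Rpower (h n) r)))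
          (fun n => Rpower (hs n) a * exp (- (2 * alpha / Rpower (hs n) r))))
  /\ (forall a : R,
        littleo
          (fun n => Rpower (hs n) a / INR n * exp (2 * beta / Rpower (hs n) s))
          (fun n => exp (- (2 * alpha / Rpower (hs n) r))))
  /\ (forall gamma : R,
        eventually (fun n =>
          Rpower (hs n) (s + 2 * gamma - 1) * exp (2 * beta / Rpower (hs n) s)
          <= Rpower (h n) (s + 2 * gamma - 1) * exp (2 * beta / Rpower (h n) s))).
Proof.
  intros Hr Hrs Ha Hb Hhs Hhpos Hh0 [eps [Heps Heq]].
  assert (Hs : 0 < s) by lra.
  pose (L := fun n => ln (INR n)).
  pose (l := fun n => ln (L n)).
  pose (T := fun n => - ln (hs n)).
  pose (t := fun n => - ln (h n)).
  pose (A := fun n => 2*alpha*exp(r*T n)).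
  pose (B := fun n => 2*beta*exp(s*T n)).
  pose (A' := fun n => 2*alpha*exp(r*t n)).
  pose (B' := fun n => 2*beta*exp(s*t n)).
  assert (TL : tinf L) by apply (tinf_ln _ tinf_INR).
  assert (Tl : tinf l) by apply (tinf_ln _ TL).
  assert (PA : forall n, 0 < A n) by (intro n; unfold A; pose proof (exp_pos (r * T n)); nra).
  assert (PB : forall n, 0 < B n) by (intro n; unfold B; pose proof (exp_pos (s * T n)); nra).
  assert (PA' : forall n, 0 < A' n) by (intro n; unfold A'; pose proof (exp_pos (r * t n)); nra).
  assert (PB' : forall n, 0 < B' n) by (intro n; unfold B'; pose proof (exp_pos (s * t n)); nra).
  assert (F1 : eventually (fun n => (3 <= n)%nat /\ 0 < hs n /\ A n + B n = L n - l n ^ 2)).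
  { exists 3%nat. intros n Hn. destruct (Hhs n Hn) as [H1 H2]. rewrite !rp_div in H2.
    split; [exact Hn|split; [exact H1|]]. exact H2. }
  assert (F2 : eventually (fun n => 0 < h n /\ -(b * t n) + A' n + B' n = L n + C * (1 + eps n))).
  { destruct Heq as [N HN]. destruct Hhpos as [N' HN']. exists (N + N')%nat. intros n Hn.
    split; [apply HN'; lia|]. specialize (HN n ltac:(lia)). rewrite !rp_div in HN.
    unfold A', B', t, L. rewrite <- HN. ring. }
  assert (LL : eventually (fun n => 1 <= L n /\ 0 <= l n)).
  { apply ev_and; [apply TL|apply Tl]. }
  assert (EL : forall n, 1 <= L n -> L n = exp (l n)).
  { intros n Hn. unfold l. rewrite exp_ln; lra. }
  pose (q := (s - r) / s).
  assert (Hq : 0 < q) by (unfold q; apply Rdiv_lt_0_compat; lra).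
  pose (KA := 2*alpha*exp(-(r/s)*ln(2*beta))).
  assert (HKA : 0 < KA) by (unfold KA; pose proof (exp_pos (-(r/s)*ln(2*beta))); nra).
  assert (AL : eventually (fun n => 0 <= A n / L n <= KA * exp (-q * l n))).
  { apply ev_mono with (fun n => ((3 <= n)%nat /\ 0 < hs n /\ A n + B n = L n - l n ^ 2) /\ (1 <= L n /\ 0 <= l n)); [|now apply ev_and].
    intros n [[_ [H1 H2]] [H3 H4]]. pose proof (PA n). pose proof (PB n).
    split. { apply Rlt_le, Rdiv_lt_0_compat; lra. }
    assert (HBL : B n <= L n) by nra.
    assert (HlB : ln (B n) = ln (2*beta) + s * T n).
    { unfold B. rewrite ln_mult, ln_exp; [ring|lra|apply exp_pos]. }
    assert (Hl : ln (B n) <= l n) by (apply ln_le; auto).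
    assert (HrT : r * T n <= r / s * (l n - ln (2*beta))).
    { replace (r * T n) with (r / s * (s * T n)) by (field; lra).
      apply Rmult_le_compat_l; [apply Rlt_le, Rdiv_lt_0_compat; lra| lra]. }
    rewrite (EL n H3). unfold A, KA, Rdiv. rewrite <- exp_Ropp, Rmult_assoc, <- exp_plus.
    rewrite (Rmult_assoc (2*alpha) (exp _)), <- exp_plus. apply Rmult_le_compat_l; [lra|]. apply exp_le.
    unfold q. unfold Rdiv in *. 
    replace (- ((s - r) * / s) * l n) with (- l n + r * / s * l n) by (field; lra). nra. }
  assert (lL : Un_cv (fun n => l n ^ 2 / L n) 0).
  { apply cv_ext_ev with (fun n => l n ^ 2 * exp (- 1 * l n)); [|exact (cv_poly_exp 1 l Rlt_0_1 Tl)].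
    apply ev_mono with (fun n => 1 <= L n /\ 0 <= l n); [|exact LL].
    intros n [H1 H2]. rewrite (EL n H1) at 1. unfold Rdiv. rewrite <- exp_Ropp. f_equal. f_equal. ring. }
  assert (AL0 : Un_cv (fun n => A n / L n) 0).
  { apply cv_squeeze0 with (fun n => KA * exp (- q * l n)); [|apply cv_scal, cv_exp_neg; auto].
    apply ev_mono with (fun n => 0 <= A n / L n <= KA * exp (-q * l n)); [|exact AL].
    intros n [H1 H2]. rewrite Rabs_right; lra. }
  assert (BL : Un_cv (fun n => B n / L n) 1).
  { apply cv_ext_ev with (fun n => 1 + (-1 * (l n ^ 2 / L n) + -1 * (A n / L n))).
    - apply ev_mono with (fun n => ((3 <= n)%nat /\ 0 < hs n /\ A n + B n = L n - l n ^ 2) /\ (1 <= L n /\ 0 <= l n)); [|now apply ev_and].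
      intros n [[_ [H1 H2]] [H3 H4]]. field_simplify; [|lra|lra]. f_equal. lra.
    - apply cv_const_plus, cv_plus0; apply cv_scal; auto. }
  pose (D := fun n => ln (B n / L n)).
  assert (HD : Un_cv D 0) by (apply cv_ln, BL).
  assert (DT : eventually (fun n => s * T n = l n - ln (2*beta) + D n)).
  { apply ev_mono with (fun n => 1 <= L n /\ 0 <= l n); [|exact LL].
    intros n [H1 H2]. unfold D. rewrite ln_div; [|apply PB|lra].
    unfold B; cbv beta. rewrite (ln_mult (2*beta)), ln_exp; [|lra|apply exp_pos]. unfold l. ring. }
  split.
  {
    apply asymp_ratio. { intro n. unfold Rpower. apply Rgt_not_eq, exp_pos. }
    apply cv_ext_ev with (fun n => exp (- (1/s) * D n)); [|apply cv_exp, cv_scal, HD].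
    apply ev_mono with (fun n => ((3 <= n)%nat /\ 0 < hs n /\ A n + B n = L n - l n ^ 2) /\ (1 <= L n /\ 0 <= l n) /\ s * T n = l n - ln (2*beta) + D n); [|apply ev_and; [exact F1|apply ev_and; [exact LL|exact DT]]].
    intros n [[_ [H1 _]] [[H3 H4] H5]].
    unfold Rpower. rewrite <- (exp_ln (hs n)) at 1 by auto.
    change (ln (INR n)) with (L n). rewrite ln_div by lra. change (ln (L n)) with (l n).
    assert (ET : ln (hs n) = - ((l n - ln (2*beta) + D n) / s)).
    { rewrite <- H5. change (- ln (hs n)) with (T n) in *. unfold T. field; lra. }
    rewrite ET. unfold Rdiv. rewrite <- exp_Ropp, <- exp_plus. f_equal. field; lra. }
  assert (Tt : tinf t).
  { intro M. apply ev_mono with (fun n => 0 < h n /\ Rabs (h n - 0) < exp (- M)).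
    - intros n [H1 H2]. rewrite Rminus_0_r, Rabs_right in H2 by lra.
      apply ln_increasing in H2; auto. rewrite ln_exp in H2. unfold t. lra.
    - apply ev_and; [exact Hhpos| apply cv_ev; [exact Hh0|apply exp_pos]]. }
  pose (K3 := ln 4 - ln (2*beta)).
  assert (G2 : eventually (fun n => t n <= (l n + K3) / s)).
  { pose (t0 := 4 * Rabs b / (beta * s^2) + 1).
    apply ev_mono with (fun n => (0 < h n /\ -(b * t n) + A' n + B' n = L n + C * (1 + eps n))
       /\ Rabs (eps n - 0) < 1 /\ t0 <= t n /\ 2 * Rabs C + 1 <= L n).
    2:{ apply ev_and; [exact F2|apply ev_and; [apply cv_ev; auto; lra|apply ev_and; [apply Tt|apply TL]]]. }
    intros n [[H1 H2] [H3 [H4 H5]]]. rewrite Rminus_0_r in H3.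
    pose proof (abs_C_eps C (eps n) ltac:(lra)) as HC.
    pose proof (Rle_abs (C * (1 + eps n))).
    pose proof (Rabs_pos b). pose proof (Rabs_pos C). pose proof (PA' n).
    assert (Hbs : 0 < beta * s ^ 2) by (apply Rmult_lt_0_compat; [lra|apply pow_lt; lra]).
    assert (Ht0 : 4 * Rabs b <= beta * s^2 * t n - beta * s ^2).
    { unfold t0 in H4. apply Rmult_le_compat_l with (r := beta * s^2) in H4; [|lra].
      replace (beta * s ^ 2 * (4 * Rabs b / (beta * s ^ 2) + 1)) with (4 * Rabs b + beta * s^2) in H4 by (field; lra). lra. }
    assert (Htpos : 1 <= t n). { unfold t0 in H4. assert (0 <= 4 * Rabs b / (beta * s ^ 2)) by (apply Rmult_le_pos; [lra|left; apply Rinv_0_lt_compat; lra]). lra. }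
    assert (HB' : beta * s^2 * t n ^ 2 / 2 <= B' n).
    { unfold B'. pose proof (exp_sq (s * t n) ltac:(nra)). nra. }
    assert (Hbt : b * t n <= Rabs b * t n) by (apply Rmult_le_compat_r; [lra|apply Rle_abs]).
    assert (Hbt2 : Rabs b * t n <= B' n / 2) by nra.
    assert (HB4 : B' n <= 4 * L n) by lra.
    assert (Hln : ln (B' n) <= ln (4 * L n)) by (apply ln_le; auto).
    rewrite ln_mult in Hln by lra. unfold B' in Hln. rewrite (ln_mult (2*beta)), ln_exp in Hln by (try lra; apply exp_pos).
    change (ln (L n)) with (l n) in Hln. unfold K3.
    apply Rmult_le_reg_l with s; [lra|]. unfold Rdiv. field_simplify; lra. }
  pose (K1 := Rabs b / s).
  pose (K2 := 2 * Rabs C + Rabs b * Rabs K3 / s).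
  assert (HK1 : 0 <= K1) by (unfold K1; apply Rmult_le_pos; [apply Rabs_pos|left; apply Rinv_0_lt_compat; lra]).
  assert (HK2 : 0 <= K2).
  { unfold K2. pose proof (Rabs_pos C). assert (0 <= Rabs b * Rabs K3 / s); [|lra].
    apply Rmult_le_pos; [apply Rmult_le_pos; apply Rabs_pos|left; apply Rinv_0_lt_compat; lra]. }
  pose (Dl := fun n => A' n + B' n - (A n + B n)).
  assert (G3 : eventually (fun n => 0 < Dl n <= 2 * l n ^ 2)).
  { apply ev_mono with (fun n => ((3 <= n)%nat /\ 0 < hs n /\ A n + B n = L n - l n ^ 2)
       /\ (0 < h n /\ -(b * t n) + A' n + B' n = L n + C * (1 + eps n))
       /\ Rabs (eps n - 0) < 1 /\ 0 <= t n /\ t n <= (l n + K3) / s /\ K1 + K2 + 1 <= l n).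
    2:{ apply ev_and; [exact F1|apply ev_and; [exact F2|apply ev_and; [apply cv_ev; auto; lra|apply ev_and; [apply Tt|apply ev_and; [exact G2|apply Tl]]]]]. }
    intros n [[_ [_ H1]] [[_ H2] [H3 [H4 [H5 H6]]]]]. rewrite Rminus_0_r in H3.
    pose proof (abs_C_eps C (eps n) ltac:(lra)) as HC.
    apply Rabs_le_between in HC. 
    assert (Hbt : Rabs (b * t n) <= K1 * l n + Rabs b * Rabs K3 / s).
    { rewrite Rabs_mult, (Rabs_right (t n)) by lra. unfold K1.
      pose proof (Rabs_pos b). pose proof (Rle_abs K3).
      assert (Rabs b * t n <= Rabs b * ((l n + Rabs K3) / s)).
      { apply Rmult_le_compat_l; auto. eapply Rle_trans; [exact H5|].
        unfold Rdiv. apply Rmult_le_compat_r; [left; apply Rinv_0_lt_compat; lra|lra]. }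
      unfold Rdiv in *. lra. }
    apply Rabs_le_between in Hbt.
    assert (EDl : Dl n = l n ^ 2 + C * (1 + eps n) + b * t n) by (unfold Dl; lra).
    rewrite EDl. assert (HK2e : K2 = 2*Rabs C + Rabs b * Rabs K3 / s) by reflexivity.
    assert (l n * (l n - (K1 + K2 + 1)) >= 0) by (apply Rle_ge, Rmult_le_pos; lra).
    split; nra. }
  pose (dl := fun n => t n - T n).
  assert (G4 : eventually (fun n => 0 < dl n /\ s * dl n * B n <= Dl n /\ 0 <= A' n - A n)).
  { apply ev_mono with (fun n => 0 < Dl n <= 2 * l n ^ 2); [|exact G3].
    intros n [H1 H2].
    assert (Hd : 0 < dl n).
    { destruct (Rle_lt_dec (t n) (T n)) as [Hle|Hlt]; [|unfold dl; lra].
      assert (A' n <= A n).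
      { unfold A, A'. apply Rmult_le_compat_l; [lra|]. apply exp_le. apply Rmult_le_compat_l; lra. }
      assert (B' n <= B n).
      { unfold B, B'. apply Rmult_le_compat_l; [lra|]. apply exp_le. apply Rmult_le_compat_l; lra. }
      unfold Dl in H1. lra. }
    assert (EA : A' n = A n * exp (r * dl n)).
    { unfold A', A, dl; cbv beta. rewrite (Rmult_assoc (2*alpha) (exp _) (exp _)), <- exp_plus. do 2 f_equal. ring. }
    assert (EB : B' n = B n * exp (s * dl n)).
    { unfold B', B, dl; cbv beta. rewrite (Rmult_assoc (2*beta) (exp _) (exp _)), <- exp_plus. do 2 f_equal. ring. }
    pose proof (exp_ineq1_le (r * dl n)). pose proof (exp_ineq1_le (s * dl n)).
    pose proof (PA n). pose proof (PB n).
    assert (0 <= r * dl n) by nra.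
    split; [auto|split].
    - unfold Dl. rewrite EA, EB. nra.
    - rewrite EA. nra. }
  assert (BL2 : eventually (fun n => L n / 2 <= B n)).
  { apply ev_mono with (fun n => Rabs (B n / L n - 1) < 1/2 /\ 1 <= L n /\ 0 <= l n).
    2:{ apply ev_and; [apply cv_ev; auto; lra|exact LL]. }
    intros n [H1 [H2 _]]. apply Rabs_def2 in H1. destruct H1 as [H1 H1'].
    apply Rmult_lt_compat_r with (r := L n) in H1'; [|lra].
    unfold Rdiv in H1'. rewrite Rmult_minus_distr_r, Rmult_assoc, Rinv_l in H1' by lra. lra. }
  assert (G5 : eventually (fun n => 0 < dl n /\ L n * dl n <= 4 / s * l n ^ 2)).
  { apply ev_mono with (fun n => (0 < Dl n <= 2 * l n ^ 2) /\ (0 < dl n /\ s * dl n * B n <= Dl n /\ 0 <= A' n - A n) /\ L n / 2 <= B n).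
    2:{ apply ev_and; [exact G3|apply ev_and; [exact G4|exact BL2]]. }
    intros n [[H1 H2] [[H3 [H4 _]] H5]]. split; auto.
    assert (s * dl n * (L n / 2) <= s * dl n * B n) by (apply Rmult_le_compat_l; nra).
    apply Rmult_le_reg_l with (s / 2); [lra|]. unfold Rdiv in *. field_simplify; nra. }
  assert (dl0 : Un_cv dl 0).
  { apply cv_squeeze0 with (fun n => 4 / s * (l n ^ 2 * exp (- 1 * l n))); [|apply cv_scal, (cv_poly_exp 1 l Rlt_0_1 Tl)].
    apply ev_mono with (fun n => (0 < dl n /\ L n * dl n <= 4 / s * l n ^ 2) /\ 1 <= L n /\ 0 <= l n).
    2:{ apply ev_and; [exact G5|exact LL]. }
    intros n [[H1 H2] [H3 _]]. rewrite Rabs_right by lra.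
    replace (exp (- 1 * l n)) with (/ L n).
    2:{ rewrite (EL n H3) at 1. rewrite <- exp_Ropp. f_equal; ring. }
    apply Rmult_le_reg_l with (L n); [lra|]. field_simplify; lra. }
  pose (c6 := r * exp r * KA * (4 / s)).
  assert (dA0 : Un_cv (fun n => A' n - A n) 0).
  { apply cv_squeeze0 with (fun n => c6 * (l n ^ 2 * exp (- q * l n))); [|apply cv_scal, cv_poly_exp; auto].
    apply ev_mono with (fun n => (0 < dl n /\ s * dl n * B n <= Dl n /\ 0 <= A' n - A n)
      /\ (0 < dl n /\ L n * dl n <= 4 / s * l n ^ 2) /\ (0 <= A n / L n <= KA * exp (-q * l n))
      /\ (1 <= L n /\ 0 <= l n) /\ Rabs (dl n - 0) < 1).
    2:{ apply ev_and; [exact G4|apply ev_and; [exact G5|apply ev_and; [exact AL|apply ev_and; [exact LL|apply cv_ev; auto; lra]]]]. }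
    intros n [[H1 [_ H2]] [[_ H3] [[H4 H5] [[H6 H7] H8]]]].
    rewrite Rminus_0_r in H8. rewrite Rabs_right in H8 by lra.
    rewrite Rabs_right by lra.
    assert (EA : A' n = A n * exp (r * dl n)).
    { unfold A', A, dl; cbv beta. rewrite (Rmult_assoc (2*alpha) (exp _) (exp _)), <- exp_plus. do 2 f_equal. ring. }
    pose proof (PA n).
    assert (H9 : exp (r * dl n) - 1 <= r * dl n * exp r).
    { pose proof (exp_m1_le (r * dl n) ltac:(nra)).
      assert (exp (r * dl n) <= exp r) by (apply exp_le; nra).
      assert (0 <= r * dl n) by nra.
      assert (r * dl n * exp (r * dl n) <= r * dl n * exp r) by (apply Rmult_le_compat_l; lra). lra. }
    assert (H10 : A n * dl n <= KA * exp (- q * l n) * (4 / s * l n ^ 2)).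
    { replace (A n * dl n) with (A n / L n * (L n * dl n)) by (field; lra).
      apply Rmult_le_compat; nra. }
    assert (A' n - A n <= r * exp r * (A n * dl n)).
    { rewrite EA. pose proof (exp_pos r). nra. }
    pose proof (exp_pos r).
    assert (r * exp r * (A n * dl n) <= r * exp r * (KA * exp (- q * l n) * (4 / s * l n ^ 2))).
    { apply Rmult_le_compat_l; [nra|exact H10]. }
    unfold c6. lra. }
  split.
  {
    intro a. apply asymp_ratio.
    { intro n. unfold Rpower. rewrite <- exp_plus. apply Rgt_not_eq, exp_pos. }
    apply cv_ext_ev with (fun n => exp (- a * dl n + -1 * (A' n - A n))).
    2:{ apply cv_exp, cv_plus0; apply cv_scal; auto. }
    exists 0%nat. intros n _. rewrite !rp_div. unfold Rpower.
    rewrite <- !exp_plus. unfold Rdiv. rewrite <- exp_Ropp, <- exp_plus. f_equal.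
    unfold dl, A', A, t, T. ring. }
  split.
  {
    intros a e He.
    pose (Ka := Rabs a / s). pose (Kb := Rabs a * (Rabs (ln (2*beta)) + 1) / s).
    assert (HKa : 0 <= Ka) by (unfold Ka; apply Rmult_le_pos; [apply Rabs_pos|left; apply Rinv_0_lt_compat; lra]).
    assert (HKb : 0 <= Kb).
    { unfold Kb. apply Rmult_le_pos; [apply Rmult_le_pos; [apply Rabs_pos|pose proof (Rabs_pos (ln (2*beta))); lra]|left; apply Rinv_0_lt_compat; lra]. }
    apply ev_mono with (fun n => ((3 <= n)%nat /\ 0 < hs n /\ A n + B n = L n - l n ^ 2)
      /\ (1 <= L n /\ 0 <= l n) /\ s * T n = l n - ln (2*beta) + D n /\ Rabs (D n - 0) < 1
      /\ Ka + Rabs (Kb - ln e) + 1 <= l n).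
    2:{ apply ev_and; [exact F1|apply ev_and; [exact LL|apply ev_and; [exact DT|apply ev_and; [apply cv_ev; auto; lra|apply Tl]]]]. }
    intros n [[H0 [H1 H2]] [[H3 H4] [H5 [H6 H7]]]].
    rewrite Rminus_0_r in H6.
    assert (HINR : INR n = exp (L n)).
    { unfold L. rewrite exp_ln; auto. apply lt_0_INR. lia. }
    assert (E : Rpower (hs n) a / INR n * exp (2 * beta / Rpower (hs n) s)
                = exp (- a * T n - l n ^ 2) * exp (- (2 * alpha / Rpower (hs n) r))).
    { rewrite !rp_div. change (2 * alpha * exp (r * - ln (hs n))) with (A n).
      change (2 * beta * exp (s * - ln (hs n))) with (B n).
      replace (B n) with (L n - l n ^ 2 - A n) by lra.
      rewrite HINR. unfold Rpower, Rdiv. rewrite <- exp_Ropp, <- !exp_plus. f_equal.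
      unfold T. ring. }
    rewrite E. rewrite Rabs_mult, !(Rabs_right (exp _)) by (apply Rle_ge, Rlt_le, exp_pos).
    apply Rmult_le_compat_r; [left; apply exp_pos|].
    rewrite <- (exp_ln e) by auto. apply exp_le.
    assert (HT : Rabs (T n) <= (l n + Rabs (ln (2*beta)) + 1) / s).
    { replace (T n) with ((l n - ln (2*beta) + D n) / s) by (rewrite <- H5; field; lra).
      unfold Rdiv. rewrite Rabs_mult, (Rabs_right (/ s)) by (apply Rle_ge, Rlt_le, Rinv_0_lt_compat; lra).
      apply Rmult_le_compat_r; [left; apply Rinv_0_lt_compat; lra|].
      eapply Rle_trans; [apply Rabs_triang|]. eapply Rle_trans; [apply Rplus_le_compat_r; apply Rabs_triang|].
      rewrite Rabs_Ropp, (Rabs_right (l n)) by lra. lra. }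
    assert (HaT : - a * T n <= Ka * l n + Kb).
    { eapply Rle_trans; [apply Rle_abs|]. rewrite Rabs_mult, Rabs_Ropp.
      eapply Rle_trans; [apply Rmult_le_compat_l; [apply Rabs_pos|exact HT]|].
      unfold Ka, Kb, Rdiv. lra. }
    pose proof (Rle_abs (Kb - ln e)).
    assert (l n * (l n - (Ka + Rabs (Kb - ln e) + 1)) >= 0) by (apply Rle_ge, Rmult_le_pos; lra).
    pose proof (Rabs_pos (Kb - ln e)).
    nra. }
  {
    intro gamma. pose (c := s + 2 * gamma - 1).
    apply ev_mono with (fun n => (0 < dl n /\ s * dl n * B n <= Dl n /\ 0 <= A' n - A n)
      /\ L n / 2 <= B n /\ 2 * Rabs c / s + 1 <= L n).
    2:{ apply ev_and; [exact G4|apply ev_and; [exact BL2|apply TL]]. }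
    intros n [[H1 [H2 H3]] [H4 H5]].
    rewrite !rp_div. unfold Rpower. rewrite <- !exp_plus. apply exp_le.
    fold c.
    change (2 * beta * exp (s * - ln (hs n))) with (B n).
    change (2 * beta * exp (s * - ln (h n))) with (B' n).
    assert (EB : B' n = B n * exp (s * dl n)).
    { unfold B', B, dl; cbv beta. rewrite (Rmult_assoc (2*beta) (exp _) (exp _)), <- exp_plus. do 2 f_equal. ring. }
    pose proof (exp_ineq1_le (s * dl n)). pose proof (PB n).
    assert (HsB : B' n - B n >= s * dl n * B n) by (rewrite EB; nra).
    assert (Hc : Rabs c <= s * B n).
    { apply Rmult_le_compat_l with (r := s) in H5; [|lra].
      replace (s * (2 * Rabs c / s + 1)) with (2 * Rabs c + s) in H5 by (field; lra).
      assert (s * (L n / 2) <= s * B n) by (apply Rmult_le_compat_l; lra). lra. }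
    assert (c * dl n <= Rabs c * dl n) by (apply Rmult_le_compat_r; [lra|apply Rle_abs]).
    assert (Rabs c * dl n <= s * B n * dl n) by (apply Rmult_le_compat_r; lra).
    replace (ln (hs n)) with (- T n) by (unfold T; ring).
    replace (ln (h n)) with (- t n) by (unfold t; ring).
    unfold dl in *. nra. }
Qed.
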